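(* Let $f:\mathbb{R}^n\to\mathbb{R}$ be $C^2$ with all eigenvalues of the Hessian $D^2f(x)$ lying in $[\mu,L]$ for every $x$, where $0<\mu\le L$, and let $x^*$ be a minimizer of $f$. Fix a step size $0<\eta\le\frac{2}{L+\mu}$, a window length $m\ge1$, a regularization parameter $\lambda>0$ and an initial point $x_0$, and let $(x_k)$ be generated by Anderson-accelerated gradient descent with relaxation parameter $\beta=1$ (described in the context), with $\nabla f(x_k)\ne0$. Suppose the iterates converge to $x^*$, so that $\|x_k-x^*\|$ is sufficiently small for large $k$. Then there is a sequence $o(k)$ with $o(k)\to0$ as $k\to\infty$ such that for all sufficiently large $k$, $$\frac{\|\nabla f(x_{k+1})\|}{\|\nabla f(x_k)\|}\le \delta_k(1-\eta\mu)+o(k),\qquad \delta_k:=\frac{\|\Pi_k\nabla f(x_k)\|}{\|\nabla f(x_k)\|}\le1,$$ where $\Pi_k=I-U_k(U_k^\top U_k+\lambda I)^{-1}U_k^\top$.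
   Context: Norms are Euclidean $\ell^2$ norms (operator norm for matrices). Let $G(x)=x-\eta\nabla f(x)$. Anderson-accelerated gradient descent (AA-GD) with $\beta=1$: set $x_1=G(x_0)$; for $k\ge1$, let $m_k=\min\{m,k\}$, let $U_k=[U_{k,k-m_k},\dots,U_{k,k-1}]\in\mathbb{R}^{n\times m_k}$ with columns $U_{k,j}=\nabla f(x_k)-\nabla f(x_j)$, compute the weights $(\alpha^k_{k-m_k},\dots,\alpha^k_{k-1})^\top=(U_k^\top U_k+\lambda I)^{-1}U_k^\top\nabla f(x_k)$ (the minimizer of $\|\nabla f(x_k)-U_k\alpha\|^2+\lambda\|\alpha\|^2$), set $\alpha^k_k=1-\sum_{j=k-m_k}^{k-1}\alpha^k_j$ (so the weights sum to one), and define $x_{k+1}=\sum_{j=k-m_k}^{k}\alpha^k_j G(x_j)$. *)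

(* Defs.v *)
From HB Require Import structures.
From mathcomp Require Import all_boot all_order all_algebra.
From mathcomp Require Import all_classical all_reals all_analysis.
Set Implicit Arguments. Unset Strict Implicit. Unset Printing Implicit Defensive.
Import Order.TTheory GRing.Theory Num.Theory.
Import numFieldNormedType.Exports.
Local Open Scope ring_scope.

Definition enorm (R : realType) (n : nat) (v : 'cV[R]_n) : R :=
  Num.sqrt (\sum_(i < n) v i 0 ^+ 2).

Definition Gmap (R : realType) (n : nat) (eta : R) (g : 'cV[R]_n -> 'cV[R]_n)
  (x : 'cV[R]_n) : 'cV[R]_n := x - eta *: g x.

Definition mk (m k : nat) : nat := minn m k.

Definition Umat (R : realType) (n : nat) (g : 'cV[R]_n -> 'cV[R]_n)
  (x : nat -> 'cV[R]_n) (m k : nat) : 'M[R]_(n, mk m k) :=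
  \matrix_(i < n, j < mk m k) (g (x k) - g (x (k - mk m k + j)%N)) i 0.

Definition alphaAA (R : realType) (n : nat) (g : 'cV[R]_n -> 'cV[R]_n)
  (x : nat -> 'cV[R]_n) (m : nat) (lambda : R) (k : nat) : 'cV[R]_(mk m k) :=
  let U := Umat g x m k in
  invmx (U^T *m U + lambda%:M) *m U^T *m g (x k).

Definition PiAA (R : realType) (n : nat) (g : 'cV[R]_n -> 'cV[R]_n)
  (x : nat -> 'cV[R]_n) (m : nat) (lambda : R) (k : nat) : 'M[R]_n :=
  let U := Umat g x m k in
  1%:M - U *m invmx (U^T *m U + lambda%:M) *m U^T.

Definition AAGD_seq (R : realType) (n : nat) (eta : R) (g : 'cV[R]_n -> 'cV[R]_n)
  (m : nat) (lambda : R) (x : nat -> 'cV[R]_n) : Prop :=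
  x 1%N = Gmap eta g (x 0%N) /\
  forall k : nat, (1 <= k)%N ->
    let a := alphaAA g x m lambda k in
    x k.+1 = \sum_(j < mk m k) a j 0 *: Gmap eta g (x (k - mk m k + j)%N)
             + (1 - \sum_(j < mk m k) a j 0) *: Gmap eta g (x k).

(* Main.v *)
Require Import Defs.
From HB Require Import structures.
From mathcomp Require Import all_boot all_order all_algebra.
From mathcomp Require Import all_classical all_reals all_analysis.
From mathcomp.algebra_tactics Require Import ring lra.
Import Order.TTheory GRing.Theory Num.Theory.
Import numFieldNormedType.Exports.
Local Open Scope classical_set_scope.
Local Open Scope ring_scope.
Set Implicit Arguments. Unset Strict Implicit. Unset Printing Implicit Defensive.
Section Dot.
Context {R : realType}.

Definition dotv n (u v : 'cV[R]_n) : R := \sum_i u i 0 * v i 0.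

Lemma dotvC n (u v : 'cV[R]_n) : dotv u v = dotv v u.
Proof. by apply: eq_bigr => i _; rewrite mulrC. Qed.

Lemma dotvDl n (u w v : 'cV[R]_n) : dotv (u + w) v = dotv u v + dotv w v.
Proof. by rewrite /dotv -big_split; apply: eq_bigr => i _; rewrite !mxE mulrDl. Qed.

Lemma dotvDr n (u w v : 'cV[R]_n) : dotv v (u + w) = dotv v u + dotv v w.
Proof. by rewrite dotvC dotvDl !(dotvC v). Qed.

Lemma dotvZl n a (u v : 'cV[R]_n) : dotv (a *: u) v = a * dotv u v.
Proof. by rewrite /dotv mulr_sumr; apply: eq_bigr => i _; rewrite !mxE mulrA. Qed.

Lemma dotvZr n a (u v : 'cV[R]_n) : dotv v (a *: u) = a * dotv v u.
Proof. by rewrite dotvC dotvZl dotvC. Qed.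

Lemma dotvNl n (u v : 'cV[R]_n) : dotv (- u) v = - dotv u v.
Proof. by rewrite -scaleN1r dotvZl mulN1r. Qed.

Lemma dotvNr n (u v : 'cV[R]_n) : dotv v (- u) = - dotv v u.
Proof. by rewrite dotvC dotvNl dotvC. Qed.

Lemma dotvBl n (u w v : 'cV[R]_n) : dotv (u - w) v = dotv u v - dotv w v.
Proof. by rewrite dotvDl dotvNl. Qed.

Lemma dotvBr n (u w v : 'cV[R]_n) : dotv v (u - w) = dotv v u - dotv v w.
Proof. by rewrite dotvDr dotvNr. Qed.

Lemma dotv0l n (v : 'cV[R]_n) : dotv 0 v = 0.
Proof. by rewrite /dotv big1 // => i _; rewrite mxE mul0r. Qed.

Lemma dotv0r n (v : 'cV[R]_n) : dotv v 0 = 0.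
Proof. by rewrite dotvC dotv0l. Qed.

Lemma dotv_suml n m (F : 'I_m -> 'cV[R]_n) v :
  dotv (\sum_j F j) v = \sum_j dotv (F j) v.
Proof.
elim/big_rec2: _ => [|j y1 y2 _ <-]; first exact: dotv0l.
by rewrite dotvDl.
Qed.

Lemma dotvv_ge0 n (v : 'cV[R]_n) : 0 <= dotv v v.
Proof. by apply: sumr_ge0 => i _; rewrite -expr2 sqr_ge0. Qed.

Lemma dotvv_eq0 n (v : 'cV[R]_n) : dotv v v = 0 -> v = 0.
Proof.
move=> /eqP; rewrite psumr_eq0 => [/allP H|i _]; last by rewrite -expr2 sqr_ge0.
apply/matrixP => i j; rewrite ord1 mxE.
have := H i (mem_index_enum i); rewrite implyTb -expr2 sqrf_eq0.
by move/eqP.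
Qed.

Lemma dotv_adj n m (A : 'M[R]_(n, m)) (u : 'cV[R]_n) (v : 'cV[R]_m) :
  dotv u (A *m v) = dotv (A^T *m u) v.
Proof.
rewrite /dotv; under eq_bigr do rewrite mxE mulr_sumr.
under [RHS]eq_bigr do rewrite mxE mulr_suml.
rewrite exchange_big; apply: eq_bigr => i _; apply: eq_bigr => j _.
by rewrite mxE; ring.
Qed.

Lemma enorm_sq n (v : 'cV[R]_n) : enorm v ^+ 2 = dotv v v.
Proof.
rewrite /enorm sqr_sqrtr; last exact: dotvv_ge0.
by apply: eq_bigr => i _; rewrite expr2.
Qed.

Lemma enormE n (v : 'cV[R]_n) : enorm v = Num.sqrt (dotv v v).
Proof. by rewrite /enorm; congr Num.sqrt; apply: eq_bigr => i _; rewrite expr2. Qed.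

Lemma enorm_ge0 n (v : 'cV[R]_n) : 0 <= enorm v.
Proof. exact: sqrtr_ge0. Qed.

Lemma enorm_eq0 n (v : 'cV[R]_n) : enorm v = 0 -> v = 0.
Proof.
move=> h; apply: dotvv_eq0; by rewrite -enorm_sq h expr0n.
Qed.

Lemma enorm0 n : enorm (0 : 'cV[R]_n) = 0.
Proof. by rewrite enormE dotv0l sqrtr0. Qed.

Lemma le_sq (a b : R) : 0 <= b -> a ^+ 2 <= b ^+ 2 -> a <= b.
Proof. move=> hb h; nra. Qed.

Lemma quad_disc (a b c : R) : 0 <= c ->
  (forall t, 0 <= a + 2 * b * t + c * t ^+ 2) -> b ^+ 2 <= a * c.
Proof.
move=> c0 H; have [cz|cpos] := eqVneq c 0.
  subst c; rewrite mulr0.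
  have h := H (- (a + 1) / (2 * b)).
  have [bz|bnz] := eqVneq b 0; first by rewrite bz expr0n.
  exfalso; move: h; rewrite mul0r addr0.
  have -> : 2 * b * (- (a + 1) / (2 * b)) = - (a + 1) by field; rewrite bnz.
  lra.
have cp : 0 < c by rewrite lt_def cpos c0.
have := H (- b / c); rewrite -mulrA mulrA.
have -> : c * (- b / c) ^+ 2 = b ^+ 2 / c.
  by field; rewrite cpos.
have -> : 2 * b * (- b / c) = - 2 * (b ^+ 2 / c) by field; rewrite cpos.
move=> h; have : 0 <= a - b ^+ 2 / c by lra.
rewrite subr_ge0 ler_pdivrMr //.
Qed.

Lemma cs n (u v : 'cV[R]_n) : dotv u v ^+ 2 <= dotv u u * dotv v v.
Proof.
apply: quad_disc; first exact: dotvv_ge0.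
move=> t; have := dotvv_ge0 (u + t *: v).
rewrite !dotvDl !dotvDr !dotvZl !dotvZr [dotv v u]dotvC; lra.
Qed.

Lemma cs_enorm n (u v : 'cV[R]_n) : `|dotv u v| <= enorm u * enorm v.
Proof.
apply: le_sq; first by rewrite mulr_ge0 // enorm_ge0.
by rewrite real_normK ?num_real // exprMn !enorm_sq cs.
Qed.

Lemma dotv_le n (u v : 'cV[R]_n) : dotv u v <= enorm u * enorm v.
Proof. exact: le_trans (ler_norm _) (cs_enorm _ _). Qed.

Lemma enormD n (u v : 'cV[R]_n) : enorm (u + v) <= enorm u + enorm v.
Proof.
apply: le_sq; first by rewrite addr_ge0 // enorm_ge0.
rewrite enorm_sq sqrrD !enorm_sq dotvDl !dotvDr [dotv v u]dotvC.
have := dotv_le u v; lra.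
Qed.

Lemma enormZ n a (v : 'cV[R]_n) : enorm (a *: v) = `|a| * enorm v.
Proof.
rewrite !enormE dotvZl dotvZr mulrA -expr2 sqrtrM ?sqr_ge0 //.
by rewrite sqrtr_sqr.
Qed.

Lemma enormN n (v : 'cV[R]_n) : enorm (- v) = enorm v.
Proof. by rewrite -scaleN1r enormZ normrN normr1 mul1r. Qed.

Lemma enormB n (u v : 'cV[R]_n) : enorm (u - v) <= enorm u + enorm v.
Proof. by rewrite -(enormN v) enormD. Qed.

Lemma enorm_sum n m (F : 'I_m -> 'cV[R]_n) :
  enorm (\sum_j F j) <= \sum_j enorm (F j).
Proof.
elim/big_rec2: _ => [|j y1 y2 _ h]; first by rewrite enorm0.
exact: le_trans (enormD _ _) (lerD (lexx _) h).
Qed.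

Lemma enorm_tri_rev n (u v : 'cV[R]_n) : enorm u - enorm v <= enorm (u - v).
Proof. have := enormD (u - v) v; rewrite subrK; lra. Qed.

End Dot.
Section Sym.
Context {R : realType} {n : nat}.
Implicit Types (S : 'M[R]_n) (u v w : 'cV[R]_n).

Definition Qf S v := dotv v (S *m v).

Lemma symm_dot S u v : S^T = S -> dotv u (S *m v) = dotv (S *m u) v.
Proof. by move=> hS; rewrite dotv_adj hS. Qed.

Lemma Qf_add S u v t : S^T = S ->
  Qf S (u + t *: v) = Qf S u + 2 * dotv u (S *m v) * t + Qf S v * t ^+ 2.
Proof.
move=> hS; rewrite /Qf mulmxDr -scalemxAr !dotvDl !dotvDr !dotvZl !dotvZr.
rewrite [dotv v (S *m u)]dotvC -symm_dot //; ring.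
Qed.

Lemma cs_psd S u v : S^T = S -> (forall w, 0 <= Qf S w) ->
  dotv u (S *m v) ^+ 2 <= Qf S u * Qf S v.
Proof.
move=> hS hpos; apply: quad_disc => // t.
by rewrite -Qf_add.
Qed.

Lemma bound_psd S M v : S^T = S -> 0 <= M ->
  (forall w, 0 <= Qf S w <= M * enorm w ^+ 2) ->
  enorm (S *m v) ^+ 2 <= M * Qf S v.
Proof.
move=> hS M0 hQ.
have pos : forall w, 0 <= Qf S w by move=> w; case/andP: (hQ w).
set z := S *m v.
have e1 : enorm z ^+ 2 = dotv v (S *m z) by rewrite enorm_sq symm_dot.
have h1 := cs_psd v z hS pos.
have h2 : Qf S z <= M * enorm z ^+ 2 by case/andP: (hQ z).
have h3 := pos v.
rewrite -e1 in h1.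
set X := enorm z ^+ 2 in e1 h1 h2 *.
have X0 : 0 <= X by rewrite /X sqr_ge0.
have h4 := ler_wpM2l h3 h2.
have MQ0 : 0 <= M * Qf S v by rewrite mulr_ge0.
nra.
Qed.

Lemma contract_sym S (mu L eta : R) v : S^T = S -> 0 < mu -> mu <= L ->
  (forall w, mu * enorm w ^+ 2 <= Qf S w <= L * enorm w ^+ 2) ->
  0 < eta -> eta * (L + mu) <= 2 ->
  enorm (v - eta *: (S *m v)) <= (1 - eta * mu) * enorm v.
Proof.
move=> hS mu0 muL hQ eta0 etaLm.
have ha : 0 <= 1 - eta * mu by nra.
apply: le_sq; first by rewrite mulr_ge0 // enorm_ge0.
set A := S - mu%:M.
have hA : A^T = A by rewrite /A linearB /= hS tr_scalar_mx.
have Av : forall w, A *m w = S *m w - mu *: w.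
  by move=> w; rewrite /A mulmxBl mul_scalar_mx.
have QA : forall w, Qf A w = Qf S w - mu * enorm w ^+ 2.
  by move=> w; rewrite /Qf Av dotvBr dotvZr enorm_sq.
have hQA : forall w, 0 <= Qf A w <= (L - mu) * enorm w ^+ 2.
  move=> w; rewrite QA; case/andP: (hQ w) => h1 h2; apply/andP; split; lra.
have Lmu : 0 <= L - mu by lra.
have hb := bound_psd v hA Lmu hQA.
have hP := hQA v; rewrite QA in hP.
have e : v - eta *: (S *m v) = (1 - eta * mu) *: v - eta *: (A *m v).
  by rewrite Av; apply/matrixP => i j; rewrite !mxE; ring.
rewrite e enorm_sq dotvBl !dotvBr !dotvZl !dotvZr [dotv (A *m v) v]dotvC.
rewrite -enorm_sq -[dotv (A *m v) (A *m v)]enorm_sq -/(Qf A v) QA exprMn.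
rewrite Av enorm_sq in hb *.
move: hb hP; rewrite -/(Qf A v) QA.
set P := Qf S v - mu * enorm v ^+ 2.
set Z := dotv (S *m v - mu *: v) (S *m v - mu *: v).
set V := enorm v ^+ 2.
move=> hb hP.
have : eta ^+ 2 * Z <= eta ^+ 2 * ((L - mu) * P) by apply: ler_wpM2l => //; rewrite sqr_ge0.
have hh2 : 0 <= eta * P * (2 - eta * (L + mu)).
  case/andP: hP => hP1 _; apply: mulr_ge0; first by apply: mulr_ge0 => //; exact: ltW.
  by rewrite subr_ge0.
move=> hh; nra.

Qed.

Lemma lower_sym S (mu : R) v :
  mu * enorm v ^+ 2 <= Qf S v -> mu * enorm v <= enorm (S *m v).
Proof.
move=> h; have h1 := dotv_le v (S *m v).
have h0 := enorm_ge0 v; have h2 := enorm_ge0 (S *m v).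
rewrite /Qf in h; have [z|nz] := eqVneq (enorm v) 0.
  by rewrite z mulr0.
have vp : 0 < enorm v by rewrite lt_def nz h0.
rewrite -(ler_pM2l vp); nra.
Qed.

Lemma upper_sym S (L : R) v : S^T = S -> 0 <= L ->
  (forall w, 0 <= Qf S w <= L * enorm w ^+ 2) -> enorm (S *m v) <= L * enorm v.
Proof.
move=> hS L0 hQ; have hb := bound_psd v hS L0 hQ.
have h1 := dotv_le v (S *m v); rewrite -/(Qf S v) in h1.
have h0 := enorm_ge0 v; have h2 := enorm_ge0 (S *m v).
have h3 := ler_wpM2l L0 h1.
have [z|nz] := eqVneq (enorm (S *m v)) 0.
  by rewrite z mulr_ge0.
have vp : 0 < enorm (S *m v) by rewrite lt_def nz h2.
rewrite -(ler_pM2l vp); nra.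
Qed.

End Sym.
Section Ray.
Context {R : realType}.

Lemma cont_sum (T : topologicalType) k (F : 'I_k -> T -> R) :
  (forall i, continuous (F i)) -> continuous (fun r => \sum_i F i r).
Proof.
move=> h; rewrite -fct_sumE.
apply: (big_ind (fun f : T -> R => continuous f)).
- by move=> x; exact: cvg_cst.
- move=> f g hf hg x; exact: (@continuousD _ _ _ f g x (hf x) (hg x)).
- by move=> i _; exact: h.
Qed.

Definition qr n (S : 'M[R]_n) (r : 'rV[R]_n) := Qf S r^T.

Lemma qrE n (S : 'M[R]_n) r : qr S r = \sum_i (r 0 i * \sum_j (S i j * r 0 j)).
Proof.
rewrite /qr /Qf /dotv; apply: eq_bigr => i _; rewrite !mxE; congr (_ * _).
by apply: eq_bigr => j _; rewrite !mxE.
Qed.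

Lemma qr_cont n (S : 'M[R]_n) : continuous (qr S).
Proof.
have -> : qr S = fun r => \sum_i (r 0 i * \sum_j (S i j * r 0 j)).
  by apply/funext => r; exact: qrE.
apply: cont_sum => i r.
have h1 : {for r, continuous (fun r : 'rV[R]_n => r 0 i)}.
  exact: (@coord_continuous R 1 n 0 i r).
have h2 : continuous (fun r : 'rV[R]_n => \sum_j (S i j * r 0 j)).
  apply: cont_sum => j r'.
  have h3 : {for r', continuous (fun r : 'rV[R]_n => r 0 j)}.
    exact: (@coord_continuous R 1 n 0 j r').
  have h4 : {for r', continuous (fun _ : 'rV[R]_n => S i j)} by exact: (@cst_continuous _ _ (S i j) r').
  exact: (continuousM h4 h3).
exact: (continuousM h1 (h2 r)).
Qed.

Lemma Qf1 n (v : 'cV[R]_n) : Qf 1%:M v = dotv v v.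
Proof. by rewrite /Qf mul1mx. Qed.

Lemma QfZ n (S : 'M[R]_n) a v : Qf S (a *: v) = a ^+ 2 * Qf S v.
Proof. by rewrite /Qf -scalemxAr dotvZl dotvZr mulrA expr2. Qed.

Lemma Qf0 n (S : 'M[R]_n) : Qf S 0 = 0.
Proof. by rewrite /Qf dotv0l. Qed.

Lemma rayleigh_min n (S : 'M[R]_n) : (0 < n)%N -> S^T = S ->
  exists2 m0, eigenvalue S m0 & forall v, m0 * enorm v ^+ 2 <= Qf S v.
Proof.
move=> n0 hS.
pose A := [set r : 'rV[R]_n | qr 1%:M r = 1].
have A0 : A !=set0.
  pose v : 'cV[R]_n := const_mx 1.
  have vn0 : v != 0.
    apply/eqP => /matrixP /(_ (Ordinal n0) 0); rewrite !mxE => /eqP.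
    by rewrite oner_eq0.
  have en : enorm v != 0 by apply/eqP => /enorm_eq0; exact/eqP.
  exists ((enorm v)^-1 *: v)^T; rewrite /A /= /qr trmxK QfZ Qf1 -enorm_sq.
  by rewrite exprVn mulVf // expf_neq0.
have cA : compact A.
  apply: bounded_closed_compact.
    exists 1; split => // M hM r Ar.
    rewrite /= -[`|r|]/(mx_norm r) mx_normrE.
    apply: le_trans (ltW hM).
    elim/big_ind: _ => //; first by move=> x y hx hy; rewrite ge_max hx hy.
    move=> [i j] _ /=; rewrite ord1.
    have : r 0 j ^+ 2 <= 1.
      move: Ar; rewrite /A /= /qr Qf1 /dotv => <-.
      rewrite (bigD1 j) //= !mxE -expr2 lerDl.
      by apply: sumr_ge0 => k _; rewrite mxE -expr2 sqr_ge0.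
    move=> h; apply: le_sq => //.
    by rewrite real_normK ?num_real // expr1n.
  apply: (preimage_closed (f := qr 1%:M) (D := [set x | x = 1])).
    by move=> x _; apply: qr_cont.
  exact: closed_eq.
have [c cin cmin] := EVT_min_rV A0 cA (continuous_subspaceT (qr_cont (S:=S))).
pose m0 := qr S c.
have hmin : forall v, m0 * enorm v ^+ 2 <= Qf S v.
  move=> v; have [->|vn0] := eqVneq v 0; first by rewrite enorm0 expr0n mulr0 Qf0.
  have en : enorm v != 0 by apply/eqP => /enorm_eq0; exact/eqP.
  have : ((enorm v)^-1 *: v)^T \in A.
    by rewrite inE /A /= /qr trmxK QfZ Qf1 -enorm_sq exprVn mulVf // expf_neq0.
  move=> /cmin; rewrite /qr trmxK QfZ -/m0 exprVn => h.
  have ep : 0 < enorm v ^+ 2 by rewrite lt_def expf_neq0 // sqr_ge0.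
  have h' : m0 <= (enorm v ^+ 2)^-1 * Qf S v by exact: h.
  by rewrite -ler_pdivlMr // mulrC.
exists m0 => //.
pose B := S - m0%:M.
have hB : B^T = B by rewrite /B linearB /= hS tr_scalar_mx.
have Bv : forall w : 'cV[R]_n, B *m w = S *m w - m0 *: w.
  by move=> w; rewrite /B mulmxBl mul_scalar_mx.
have QB : forall w : 'cV[R]_n, Qf B w = Qf S w - m0 * dotv w w.
  by move=> w; rewrite /Qf Bv dotvBr dotvZr.
have Bpos : forall w : 'cV[R]_n, 0 <= Qf B w.
  by move=> w; rewrite QB subr_ge0 -enorm_sq.
have cA' : qr 1%:M c = 1 by move: cin; rewrite inE.
have Bc : Qf B c^T = 0.
  by rewrite QB; move: cA'; rewrite /qr Qf1 => ->; rewrite mulr1 /m0 /qr subrr.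
have Bc0 : B *m c^T = 0.
  have := cs_psd (B *m c^T) c^T hB Bpos; rewrite Bc mulr0.
  move=> h.
  apply: dotvv_eq0; apply/eqP; rewrite -sqrf_eq0 eq_le h sqr_ge0 //.
apply/eigenvalueP; exists c.
  apply: trmx_inj; rewrite trmx_mul hS linearZ /=.
  by apply/eqP; rewrite -subr_eq0 -Bv Bc0.
apply/eqP => c0; move: cA'; rewrite c0 /qr trmx0 Qf0 => /eqP.
by rewrite eq_sym oner_eq0.
Qed.

Lemma rayleigh n (S : 'M[R]_n) (mu L : R) : S^T = S ->
  (forall a, eigenvalue S a -> mu <= a <= L) ->
  forall v, mu * enorm v ^+ 2 <= Qf S v <= L * enorm v ^+ 2.
Proof.
move=> hS hE v; case: n S hS hE v => [|n] S hS hE v.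
  have -> : v = 0 by apply/matrixP => i; case: i.
  by rewrite enorm0 expr0n !mulr0 Qf0 lexx.
have [m0 e0 h0] := rayleigh_min (ltn0Sn n) hS.
have hS' : (- S)^T = - S by rewrite linearN /= hS.
have [m1 e1 h1] := rayleigh_min (ltn0Sn n) hS'.
have := hE _ e0; case/andP => hm0 _.
have e1' : eigenvalue S (- m1).
  move/eigenvalueP: e1 => [w hw wn0]; apply/eigenvalueP; exists w => //.
  by rewrite scaleNr -hw mulmxN opprK.
have := hE _ e1'; case/andP => _ hm1.
have := h0 v; have := h1 v; rewrite /Qf mulNmx dotvNr -/(Qf S v).
have := sqr_ge0 (enorm v).
move=> h2 h3 h4; apply/andP; split; nra.
Qed.

End Ray.
Section Ana.
Context {R : realType} {n : nat}.
Implicit Types (u v w : 'cV[R]_n).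

Lemma entry_le v i : `|v i 0| <= `|v|.
Proof.
rewrite -[`|v|]/(mx_norm v) mx_normrE; apply/bigmax_geP; right.
by exists (i, 0).
Qed.

Lemma entry_le_enorm v i : `|v i 0| <= enorm v.
Proof.
apply: le_sq; first exact: enorm_ge0.
rewrite real_normK ?num_real // enorm_sq /dotv (bigD1 i) //= -expr2 lerDl.
by apply: sumr_ge0 => k _; rewrite -expr2 sqr_ge0.
Qed.

Lemma mxnorm_le_enorm v : `|v| <= enorm v.
Proof.
rewrite -[`|v|]/(mx_norm v) mx_normrE.
elim/big_ind: _ => //; first exact: enorm_ge0.
  by move=> x y hx hy; rewrite ge_max hx hy.
by move=> [i j] _ /=; rewrite ord1; exact: entry_le_enorm.
Qed.

Lemma enorm_le_mxnorm v : enorm v <= n%:R * `|v|.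
Proof.
apply: le_sq; first by rewrite mulr_ge0.
rewrite enorm_sq /dotv.
have h : \sum_i v i 0 * v i 0 <= \sum_(i < n) `|v| ^+ 2.
  apply: ler_sum => i _; rewrite -expr2 -real_normK ?num_real //.
  by rewrite ler_sqr ?nnegrE ?entry_le.
apply: (le_trans h); rewrite sumr_const card_ord exprMn.
case: n v h => [|k] v h; first by rewrite mulr0n expr0n mul0r.
rewrite -[`|v| ^+ 2 *+ _]mulr_natl.
apply: (ler_pM (ler0n _ _) (sqr_ge0 _)) => //.
by rewrite -natrX ler_nat expnS leq_pmulr.
Qed.

Lemma diff_eps (g : 'cV[R]_n -> 'cV[R]_n) p : differentiable g p ->
  forall eps, 0 < eps -> exists2 d, 0 < d & forall w, enorm w < d ->
    enorm (g (w + p) - g p - 'd g p w) <= eps * enorm w.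
Proof.
move=> hg eps e0.
have np : 0 < n%:R + 1 :> R by rewrite ltr_pwDr // ler0n.
have := diff_locally hg; move/eqaddoP => /(_ (eps / (n%:R + 1))).
rewrite divr_gt0 // => /(_ isT) /nbhs_norm0P [d d0 hd].
exists d => // w hw.
have /hd /= : `|w| < d by apply: le_lt_trans (mxnorm_le_enorm w) hw.
rewrite /= => h.
apply: (le_trans (enorm_le_mxnorm _)).
have -> : g (w + p) - g p - 'd g p w = (g \o shift p - (cst (g p) + 'd g p)) w.
  by rewrite /= opprD addrA.
apply: (le_trans (ler_wpM2l (ler0n _ _) h)).
rewrite mulrA; apply: ler_pM.
- by rewrite mulr_ge0 // divr_ge0 // ltW.
- exact: normr_ge0.
  by rewrite mulrCA ger_pMr // ler_pdivrMr // mul1r lerDl.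
- exact: mxnorm_le_enorm.
Qed.

End Ana.

Section Line.
Context {R : realType} {n : nat}.
Variables (f : 'cV[R]_n -> R) (g : 'cV[R]_n -> 'cV[R]_n).
Hypothesis hf : forall y, differentiable f y /\ forall v, 'd f y v = dotv (g y) v.

Lemma line_derive (p u : 'cV[R]_n) (r : R) :
  is_derive r 1 (fun s : R => f (p + s *: u)) (dotv (g (p + r *: u)) u).
Proof.
have E : (fun h : R => h^-1 *: (((fun s : R => f (p + s *: u)) \o shift r) (h *: 1)
            - f (p + r *: u))) =
         (fun h : R => h^-1 *: ((f \o shift (p + r *: u)) (h *: u) - f (p + r *: u))).
  apply/funext => h /=; congr (_ *: (f _ - _)).
  by rewrite scalerDl -[h%:A]/(h * 1) mulr1 addrCA.
apply: DeriveDef.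
  rewrite /derivable E; exact: diff_derivable (hf _).1.
by rewrite /derive E -/(derive f _ u) deriveE ?(hf _).2 //; exact: (hf _).1.
Qed.

Lemma line_cont (p u : 'cV[R]_n) : continuous (fun s : R => f (p + s *: u)).
Proof.
move=> r; apply: differentiable_continuous; apply/derivable1_diffP.
by case: (line_derive p u r).
Qed.

Lemma grad_zero xs : (forall y, f xs <= f y) -> g xs = 0.
Proof.
move=> hmin.
have h := @derive1_at_min R (fun s : R => f (xs + s *: g xs)) (-1) 1 0.
have m11 : (-1 : R) <= 1 by lra.
have := h m11 (fun t _ => let: DeriveDef d _ := line_derive xs (g xs) t in d).
rewrite in_itv /= ltrN10 ltr01 => /(_ isT).
have hm : forall t, t \in `]-1, 1[%R -> f (xs + 0 *: g xs) <= f (xs + t *: g xs).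
  by move=> t _; rewrite scale0r addr0.
move=> /(_ hm) hd.
have := @derive_val _ _ _ _ _ _ _ hd.
rewrite (@derive_val _ _ _ _ _ _ _ (line_derive xs (g xs) 0)) scale0r addr0.
exact: dotvv_eq0.
Qed.

End Line.
Arguments line_derive {R n f g} hf p u r.
Arguments line_cont {R n f g} hf p u.
Arguments grad_zero {R n f g} hf xs.

Section Sym2.
Context {R : realType} {n : nat}.
Variables (f : 'cV[R]_n -> R) (g : 'cV[R]_n -> 'cV[R]_n).
Hypothesis hf : forall y, differentiable f y /\ forall v, 'd f y v = dotv (g y) v.
Variables (p : 'cV[R]_n) (Hp : 'M[R]_n).

Definition Delta (u v : 'cV[R]_n) (t : R) :=
  f (p + t *: v + t *: u) - f (p + t *: u) - f (p + t *: v) + f p.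

Lemma one_side (u v : 'cV[R]_n) (eps d t : R) : 0 < eps ->
  (forall w, enorm w < d -> enorm (g (w + p) - g p - Hp *m w) <= eps * enorm w) ->
  0 < t -> t * (enorm u + enorm v) < d ->
  `|Delta u v t - t ^+ 2 * dotv (Hp *m v) u|
     <= t ^+ 2 * eps * ((enorm v + 2 * enorm u) * enorm u).
Proof.
move=> e0 hd t0 htd.
pose phi := fun r : R => f ((p + t *: v) + r *: u) - f (p + r *: u).
pose dphi := fun r : R => dotv (g ((p + t *: v) + r *: u)) u - dotv (g (p + r *: u)) u.
have hder : forall r : R, is_derive r 1 phi (dphi r).
  move=> r; apply: is_deriveB; exact: line_derive hf _ _ _.
have hcont : {within `[0, t], continuous phi}.
  apply: continuous_subspaceT => r.
  exact: (continuousB (line_cont hf (p + t *: v) u r) (line_cont hf p u r)).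
have [c cin hc] := MVT_segment (ltW t0) (fun r _ => hder r) hcont.
have c0 : 0 <= c by move: cin; rewrite in_itv /= => /andP[].
have ct : c <= t by move: cin; rewrite in_itv /= => /andP[].
have eD : Delta u v t = phi t - phi 0.
  by rewrite /Delta /phi !scale0r !addr0; lra.
pose w1 := t *: v + c *: u.
pose w2 := c *: u.
pose e1 := g (w1 + p) - g p - Hp *m w1.
pose e2 := g (w2 + p) - g p - Hp *m w2.
have eu := enorm_ge0 u; have ev := enorm_ge0 v.
have hw1 : enorm w1 <= t * (enorm v + enorm u).
  apply: (le_trans (enormD _ _)); rewrite !enormZ !ger0_norm ?(ltW t0) //.
  nra.
have hw2 : enorm w2 <= t * enorm u.
  by rewrite /w2 enormZ ger0_norm // ler_wpM2r.
have he1 : enorm e1 <= eps * (t * (enorm v + enorm u)).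
  apply: (le_trans (hd w1 _)); first by apply: le_lt_trans hw1 _; lra.
  by rewrite ler_wpM2l // ltW.
have he2 : enorm e2 <= eps * (t * enorm u).
  apply: (le_trans (hd w2 _)); first by apply: le_lt_trans hw2 _; nra.
  by rewrite ler_wpM2l // ltW.
have edphi : dphi c = t * dotv (Hp *m v) u + dotv (e1 - e2) u.
  rewrite /dphi -dotvBl [X in X = _]dotvC [dotv (e1 - e2) u]dotvC.
  rewrite [dotv (Hp *m v) u]dotvC -dotvZr -dotvDr; congr dotv.
  have -> : p + t *: v + c *: u = w1 + p by rewrite /w1 [RHS]addrC addrA.
  have -> : p + c *: u = w2 + p by rewrite /w2 addrC.
  rewrite /e1 /e2 /w1 /w2 mulmxDr -!scalemxAr.
  set a := g _; set b := g _.
  apply/matrixP => i j; rewrite !mxE; ring.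
rewrite eD hc edphi subr0.
have -> : (t * dotv (Hp *m v) u + dotv (e1 - e2) u) * t - t ^+ 2 * dotv (Hp *m v) u
  = dotv (e1 - e2) u * t by ring.
rewrite normrM [`|t|]ger0_norm; last exact: ltW.
have := cs_enorm (e1 - e2) u; have := enormB e1 e2.
move=> h1 h2.
have h3 : `|dotv (e1 - e2) u| <= (eps * (t * (enorm v + enorm u)) + eps * (t * enorm u)) * enorm u.
  apply: (le_trans h2); apply: ler_wpM2r => //; lra.
have h4 : `|dotv (e1 - e2) u| * t <= (eps * (t * (enorm v + enorm u)) + eps * (t * enorm u)) * enorm u * t.
  by apply: ler_wpM2r => //; exact: ltW.
have -> : t ^+ 2 * eps * ((enorm v + 2 * enorm u) * enorm u) =
  (eps * (t * (enorm v + enorm u)) + eps * (t * enorm u)) * enorm u * t by ring.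
exact: h4.
Qed.

Lemma Delta_sym (u v : 'cV[R]_n) (t : R) : Delta v u t = Delta u v t.
Proof. by rewrite /Delta [p + t *: u + _]addrAC; lra. Qed.

Lemma eps_zero (z C : R) : 0 <= C -> (forall eps, 0 < eps -> `|z| <= eps * C) -> z = 0.
Proof.
move=> C0 h; apply/eqP; apply/negP => /negP zn0.
have zp : 0 < `|z| by rewrite normr_gt0.
have cp : 0 < 2 * (C + 1) by lra.
have := h (`|z| / (2 * (C + 1))) (divr_gt0 zp cp).
have -> : `|z| / (2 * (C + 1)) * C = `|z| * (C / (2 * (C + 1))) by rewrite mulrAC mulrA.
have : C / (2 * (C + 1)) < 1.
  by rewrite ltr_pdivrMr ?mul1r; [nra | nra].
move=> hc h2; nra.
Qed.

Lemma hess_sym : differentiable g p -> (forall v, 'd g p v = Hp *m v) -> Hp^T = Hp.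
Proof.
move=> hg hH.
have key : forall u v : 'cV[R]_n, dotv (Hp *m v) u = dotv (Hp *m u) v.
  move=> u v; apply/eqP; rewrite -subr_eq0; apply/eqP.
  have eu := enorm_ge0 u; have ev := enorm_ge0 v.
  apply: (@eps_zero _ ((enorm v + 2 * enorm u) * enorm u + (enorm u + 2 * enorm v) * enorm v)).
    by rewrite addr_ge0 // mulr_ge0 // addr_ge0 // mulr_ge0.
  move=> eps e0.
  have [d d0 hd] := diff_eps hg e0.
  have hd' : forall w, enorm w < d -> enorm (g (w + p) - g p - Hp *m w) <= eps * enorm w.
    by move=> w; rewrite -hH; exact: hd.
  have cp : 0 < 2 * (enorm u + enorm v + 1) by lra.
  pose t := d / (2 * (enorm u + enorm v + 1)).
  have t0 : 0 < t by rewrite divr_gt0.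
  have htd : t * (enorm u + enorm v) < d.
    rewrite /t mulrAC ltr_pdivrMr // ltr_pM2l //; lra.
  have htd' : t * (enorm v + enorm u) < d by rewrite addrC.
  have h1 := one_side e0 hd' t0 htd.
  have h2 := one_side e0 hd' t0 htd'.
  rewrite Delta_sym in h2.
  have tt : 0 < t ^+ 2 by rewrite exprn_gt0.
  rewrite -(ler_pM2l tt).
  have -> : t ^+ 2 * `|dotv (Hp *m v) u - dotv (Hp *m u) v|
     = `|t ^+ 2 * (dotv (Hp *m v) u - dotv (Hp *m u) v)|.
    by rewrite normrM ger0_norm // ltW.
  have -> : t ^+ 2 * (dotv (Hp *m v) u - dotv (Hp *m u) v) =
     - (Delta u v t - t ^+ 2 * dotv (Hp *m v) u) + (Delta u v t - t ^+ 2 * dotv (Hp *m u) v).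
    by ring.
  apply: (le_trans (ler_normD _ _)); rewrite normrN.
  lra.
apply/matrixP => i j; rewrite mxE.
have := key (delta_mx i 0) (delta_mx j 0).
have dd : forall (z : 'cV[R]_n) k, dotv z (delta_mx k 0) = z k 0.
  move=> z k; rewrite /dotv (bigD1 k) //= big1 => [|l hl]; rewrite mxE.
    by rewrite !eqxx mulr1 addr0.
  by rewrite (negbTE hl) mulr0.
by rewrite !dd -!colE !mxE => ->.
Qed.

End Sym2.

Section AA.
Context {R : realType} {n p : nat}.
Variables (U : 'M[R]_(n, p)) (lam : R) (gk : 'cV[R]_n).
Hypothesis lam0 : 0 < lam.

Definition Mmat := U^T *m U + lam%:M.
Definition alph := invmx Mmat *m U^T *m gk.

Lemma Mmat_sym : Mmat^T = Mmat.
Proof. by rewrite /Mmat linearD /= trmx_mul trmxK tr_scalar_mx. Qed.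

Lemma Q_Mmat (a : 'cV[R]_p) : dotv a (Mmat *m a) = dotv (U *m a) (U *m a) + lam * dotv a a.
Proof.
by rewrite /Mmat mulmxDl -mulmxA dotvDr dotv_adj trmxK mul_scalar_mx dotvZr.
Qed.

Lemma Mmat_unit : Mmat \in unitmx.
Proof.
rewrite unitmxE unitfE; apply/negP => /det0P [v vn0 hv].
have hv' : Mmat *m v^T = 0 by rewrite -Mmat_sym -trmx_mul hv trmx0.
have := Q_Mmat v^T; rewrite hv' dotv0r.
have := dotvv_ge0 (U *m v^T); have := dotvv_ge0 v^T => h1 h2 h3.
have : lam * dotv v^T v^T <= 0 by lra.
rewrite pmulr_rle0 // => hle.
have : dotv v^T v^T = 0 by apply/eqP; rewrite eq_le hle dotvv_ge0.
move/dotvv_eq0 => /(congr1 trmx); rewrite trmxK trmx0 => v0.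
by rewrite v0 eqxx in vn0.
Qed.

Lemma normal_eq : Mmat *m alph = U^T *m gk.
Proof. by rewrite /alph !mulmxA mulmxV ?mul1mx //; exact: Mmat_unit. Qed.

Lemma key_id : lam * dotv alph alph + dotv (U *m alph) (U *m alph) = dotv (U *m alph) gk.
Proof.
have := Q_Mmat alph; rewrite normal_eq dotv_adj trmxK => ->.
by rewrite addrC.
Qed.

Lemma delta_le : enorm (gk - U *m alph) <= enorm gk.
Proof.
apply: le_sq; first exact: enorm_ge0.
rewrite !enorm_sq dotvBl !dotvBr [dotv gk (U *m alph)]dotvC.
have := key_id; have := dotvv_ge0 alph; have := dotvv_ge0 (U *m alph).
move=> h1 h2 h3; have := mulr_ge0 (ltW lam0) h2; lra.
Qed.

Lemma Pi_eq : (1%:M - U *m invmx Mmat *m U^T) *m gk = gk - U *m alph.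
Proof. by rewrite mulmxBl mul1mx /alph !mulmxA. Qed.

End AA.

Section Comb.
Context {R : realType} {n p : nat}.

Lemma mul_col (U : 'M[R]_(n, p)) (a : 'cV[R]_p) :
  U *m a = \sum_j a j 0 *: col j U.
Proof.
apply/matrixP => i k; rewrite ord1 !mxE summxE; apply: eq_bigr => j _.
by rewrite !mxE mulrC.
Qed.

Lemma comb_bound (F : 'I_p -> 'cV[R]_n) (a : 'cV[R]_p) (s : R) :
  (forall j, enorm (F j) <= s) ->
  enorm (\sum_j a j 0 *: F j) <= s * \sum_j `|a j 0|.
Proof.
move=> hF; apply: (le_trans (enorm_sum _)); rewrite mulr_sumr.
apply: ler_sum => j _; rewrite enormZ mulrC; apply: ler_wpM2r => //.
Qed.

Lemma l1_l2 (a : 'cV[R]_p) : (\sum_j `|a j 0|) ^+ 2 <= p%:R * dotv a a.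
Proof.
pose b : 'cV[R]_p := \col_j `|a j 0|.
pose c : 'cV[R]_p := const_mx 1.
have := cs b c.
have -> : dotv b c = \sum_j `|a j 0| by apply: eq_bigr => j _; rewrite !mxE mulr1.
have -> : dotv c c = p%:R by rewrite /dotv (eq_bigr (fun=> 1)) ?sumr_const ?card_ord // => j _; rewrite !mxE mulr1.
have -> : dotv b b = dotv a a.
  apply: eq_bigr => j _; rewrite !mxE -!expr2 real_normK ?num_real //.
by rewrite mulrC.
Qed.

End Comb.

Section Alpha.
Context {R : realType} {n p : nat}.
Variables (U : 'M[R]_(n, p)) (lam : R) (gk : 'cV[R]_n) (s : R).
Hypothesis lam0 : 0 < lam.
Hypothesis s0 : 0 <= s.
Hypothesis hU : forall j, enorm (col j U) <= s.

Lemma alpha_l1 : \sum_j `|alph U lam gk j 0| <= p%:R * s * enorm gk / lam.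
Proof.
set a := alph U lam gk.
set A1 := \sum_j `|a j 0|.
have hw : enorm (U *m a) <= s * A1 by rewrite mul_col comb_bound.
have k := key_id U gk lam0; rewrite -/a in k.
have h2 := dotv_le (U *m a) gk.
have h3 := l1_l2 a; rewrite -/A1 in h3.
have hU0 := dotvv_ge0 (U *m a).
have A10 : 0 <= A1 by rewrite /A1 sumr_ge0 // => j _; rewrite normr_ge0.
have G0 := enorm_ge0 gk.
have h4 : lam * dotv a a <= s * A1 * enorm gk.
  have := ler_wpM2r G0 hw; nra.
have h5 : lam * A1 ^+ 2 <= p%:R * (s * A1 * enorm gk).
  have : lam * A1 ^+ 2 <= lam * (p%:R * dotv a a) by rewrite ler_wpM2l // ltW.
  have p0 : 0 <= p%:R :> R by rewrite ler0n.
  have := ler_wpM2l p0 h4; nra.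
rewrite ler_pdivlMr //.
have [z|nz] := eqVneq A1 0; first by rewrite z mul0r !mulr_ge0 // ler0n.
have Ap : 0 < A1 by rewrite lt_def nz A10.
rewrite -(ler_pM2l Ap); nra.
Qed.

End Alpha.

Section Step.
Context {R : realType} {n : nat}.

Lemma step (S : 'M[R]_n) (mu L eta eps th : R) (gk gk1 ek ek1 rk rk1 w d : 'cV[R]_n) :
  S^T = S -> (forall v, mu * enorm v ^+ 2 <= Qf S v <= L * enorm v ^+ 2) ->
  0 < mu -> mu <= L -> 0 < eta -> eta * (L + mu) <= 2 ->
  0 <= eps -> eps <= mu / 2 -> 0 <= th -> th <= 1 ->
  gk = S *m ek + rk -> enorm rk <= eps * enorm ek ->
  gk1 = S *m ek1 + rk1 -> enorm rk1 <= eps * enorm ek1 ->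
  ek1 = ek - eta *: (gk - w) - d ->
  enorm w <= th * enorm gk -> enorm d <= th * enorm gk ->
  enorm gk1 <= (1 - eta * mu) * enorm (gk - w)
               + (th + eps) * (2 + L + 4 / mu + 2 * eta) * enorm gk.
Proof.
move=> hS hQ mu0 muL eta0 etaLm eps0 epsm th0 th1 egk hrk egk1 hrk1 eek1 hw hd.
set G := enorm gk; set E := enorm ek; set E1 := enorm ek1.
have G0 : 0 <= G := enorm_ge0 _.
have E0 : 0 <= E := enorm_ge0 _.
have L0 : 0 <= L by lra.
have hQ' : forall v, 0 <= Qf S v <= L * enorm v ^+ 2.
  move=> v; case/andP: (hQ v) => h1 h2; apply/andP; split => //.
  by apply: le_trans h1; rewrite mulr_ge0 // ?sqr_ge0 // ltW.
have hlow : mu * E <= enorm (S *m ek) by apply: lower_sym; case/andP: (hQ ek).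
have hSek : enorm (S *m ek) <= G + eps * E.
  have -> : S *m ek = gk - rk by rewrite egk addrK.
  by apply: (le_trans (enormB _ _)); rewrite lerD2l.
have hE : mu * E <= 2 * G.
  have : eps * E <= mu / 2 * E by rewrite ler_wpM2r.
  lra.
set im := mu^-1.
have im0 : 0 < im by rewrite invr_gt0.
have hE' : E <= 2 * im * G.
  have : im * (mu * E) <= im * (2 * G) by rewrite ler_wpM2l // ltW.
  by rewrite mulrA mulVf ?gt_eqF // mul1r mulrA [im * 2]mulrC.
pose Pg := gk - w.
have eg1 : gk1 = (Pg - eta *: (S *m Pg)) + w - rk - S *m d + rk1.
  rewrite /Pg egk1 eek1 !mulmxBr -!scalemxAr !mulmxBr.
  have -> : S *m ek = gk - rk by rewrite egk addrK.
  apply/matrixP => i j; rewrite !mxE; ring.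
have hc := contract_sym Pg hS mu0 muL hQ eta0 etaLm.
have hSd : enorm (S *m d) <= L * (th * G).
  apply: (le_trans (upper_sym d hS L0 hQ')); exact: ler_wpM2l.
have hE1 : E1 <= E + eta * (G + th * G) + th * G.
  rewrite /E1 eek1; apply: (le_trans (enormB _ _)); apply: lerD => //.
  apply: (le_trans (enormB _ _)); apply: lerD => //.
  rewrite enormZ ger0_norm ?(ltW eta0) //.
  apply: ler_wpM2l; first exact: ltW.
  by apply: (le_trans (enormB _ _)); apply: lerD.
have hrk1' : enorm rk1 <= eps * (2 * im * G + 2 * eta * G + G).
  apply: (le_trans hrk1); apply: ler_wpM2l => //.
  have h1 : th * G <= G by move: (ler_wpM2r G0 th1); rewrite mul1r.
  have : eta * (th * G) <= eta * G by apply: ler_wpM2l => //; exact: ltW.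
  rewrite -/E1; lra.
have hrk' : enorm rk <= eps * (2 * im * G).
  by apply: (le_trans hrk); apply: ler_wpM2l.
have tot : enorm gk1 <= (1 - eta * mu) * enorm Pg + th * G + eps * (2 * im * G)
    + L * (th * G) + eps * (2 * im * G + 2 * eta * G + G).
  rewrite eg1.
  apply: (le_trans (enormD _ _)); rewrite lerD //.
  apply: (le_trans (enormB _ _)); rewrite lerD //.
  apply: (le_trans (enormB _ _)); rewrite lerD //.
  apply: (le_trans (enormD _ _)); rewrite lerD //.
apply: (le_trans tot); rewrite -!addrA lerD2l.
have e1 : 0 <= th * G * (1 + 4 * im + 2 * eta).
  by rewrite !mulr_ge0 // addr_ge0 // ?addr_ge0 // mulr_ge0 // ?ltW.
have e2 : 0 <= eps * G * (1 + L).
  by rewrite !mulr_ge0 // addr_ge0.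
have e3 : 0 <= eps * G * (2 * im) by rewrite !mulr_ge0 // ltW.
nra.
Qed.

End Step.

Section Main.
Context {R : realType} {n : nat}.

Lemma aa_identity p (a : 'cV[R]_p) (X gX : 'cV[R]_n) (Y gY : 'I_p -> 'cV[R]_n) (eta : R) :
  \sum_j a j 0 *: (Y j - eta *: gY j) + (1 - \sum_j a j 0) *: (X - eta *: gX)
  = X - eta *: (gX - \sum_j a j 0 *: (gX - gY j)) - \sum_j a j 0 *: (X - Y j).
Proof.
apply/matrixP => i k; rewrite !(mxE, summxE).
have E1 : forall (u v : 'I_p -> R), \sum_j a j 0 * (u j - v j) =
   \sum_j a j 0 * u j - \sum_j a j 0 * v j.
  by move=> u v; rewrite -sumrB; apply: eq_bigr => j _; rewrite mulrBr.
have E2 : forall (c : R), \sum_j a j 0 * c = (\sum_j a j 0) * c.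
  by move=> c; rewrite mulr_suml.
have S1 : \sum_j (a j 0 *: (Y j - eta *: gY j)) i k = \sum_j a j 0 * (Y j i k - eta * gY j i k).
  by apply: eq_bigr => j _; rewrite !mxE.
have S2 : \sum_j (a j 0 *: (gX - gY j)) i k = \sum_j a j 0 * (gX i k - gY j i k).
  by apply: eq_bigr => j _; rewrite !mxE.
have S3 : \sum_j (a j 0 *: (X - Y j)) i k = \sum_j a j 0 * (X i k - Y j i k).
  by apply: eq_bigr => j _; rewrite !mxE.
rewrite S1 S2 S3.
rewrite !E1 !E2.
have E3 : \sum_j a j 0 * (eta * gY j i k) = eta * \sum_j a j 0 * gY j i k.
  by rewrite mulr_sumr; apply: eq_bigr => j _; ring.
rewrite E3; ring.
Qed.

End Main.

From mathcomp Require Import zify.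
Unset Implicit Arguments.

Theorem theorem3p2 (R : realType) (n : nat)
  (f : 'cV[R]_n -> R) (g : 'cV[R]_n -> 'cV[R]_n) (H : 'cV[R]_n -> 'M[R]_n)
  (mu L : R) (xstar : 'cV[R]_n) (eta : R) (m : nat) (lambda : R)
  (x : nat -> 'cV[R]_n) :
  (* f is C^2 with gradient g and Hessian H *)
  (forall y, differentiable f y /\ forall v, 'd f y v = \sum_(i < n) g y i 0 * v i 0) ->
  (forall y, differentiable g y /\ forall v, 'd g y v = H y *m v) ->
  continuous H ->
  (* eigenvalues of the Hessian lie in [mu, L] *)
  0 < mu -> mu <= L ->
  (forall y a, eigenvalue (H y) a -> mu <= a <= L) ->
  (* xstar is a minimizer *)
  (forall y, f xstar <= f y) ->
  0 < eta -> eta <= 2 / (L + mu) ->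
  (1 <= m)%N -> 0 < lambda ->
  AAGD_seq eta g m lambda x ->
  (forall k, g (x k) != 0) ->
  x @ \oo --> xstar ->
  exists o : nat -> R, o @ \oo --> (0 : R) /\
    \forall k \near \oo,
      let delta := enorm (PiAA g x m lambda k *m g (x k)) / enorm (g (x k)) in
      delta <= 1 /\
      enorm (g (x k.+1)) / enorm (g (x k)) <= delta * (1 - eta * mu) + o k.
Proof.
move=> hf hg _ mu0 muL hE hmin eta0 etale m1 lam0 [_ hAA] hgn hx.
have hf' : forall y, differentiable f y /\ forall v, 'd f y v = dotv (g y) v := hf.
have Gpos : forall k, 0 < enorm (g (x k)).
  move=> k; rewrite lt_def enorm_ge0 andbT; apply/negP => /eqP /enorm_eq0 h.
  by move: (hgn k); rewrite h eqxx.
have n0 : (0 < n)%N.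
  rewrite lt0n; apply/eqP => n00.
  have h0 : g (x 0%N) = 0 by apply/matrixP => -[i hi] j; exfalso; move: hi; rewrite n00.
  by move: (hgn 0%N); rewrite h0 eqxx.
have gxs : g xstar = 0 := grad_zero hf' xstar hmin.
set S := H xstar.
have hS : S^T = S := hess_sym hf' (hg xstar).1 (hg xstar).2.
have hR := rayleigh hS (hE xstar).
have Lm0 : 0 < L + mu by lra.
have etaLm : eta * (L + mu) <= 2 by rewrite -ler_pdivlMr.
set delta := fun k => enorm (PiAA g x m lambda k *m g (x k)) / enorm (g (x k)).
set ratio := fun k => enorm (g (x k.+1)) / enorm (g (x k)).
have hPi : forall k, PiAA g x m lambda k *m g (x k) =
    g (x k) - Umat g x m k *m alphaAA g x m lambda k.
  by move=> k; exact: (Pi_eq (Umat g x m k) lambda (g (x k))).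
have hdelta : forall k, delta k <= 1.
  move=> k; rewrite /delta ler_pdivrMr // mul1r hPi.
  exact: (delta_le (Umat g x m k) (g (x k)) lam0).
pose o := fun k => Num.max 0 (ratio k - delta k * (1 - eta * mu)).
exists o; split; last first.
  apply: nearW => k /=; split; first exact: hdelta.
  rewrite -/(ratio k) -lerBlDl /o le_max lexx orbT //.
have L0 : 0 <= L by lra.
have hQ' : forall v, 0 <= Qf S v <= L * enorm v ^+ 2.
  move=> v; case/andP: (hR v) => h1 h2; apply/andP; split => //.
  by apply: le_trans h1; rewrite mulr_ge0 // ?sqr_ge0 // ltW.
apply/cvgr0Pnorm_le => tau tau0.
set K := 2 + L + 4 / mu + 2 * eta.
have K0 : 0 < K.
  have : 0 < 4 / mu by rewrite divr_gt0.
  rewrite /K; lra.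
have tK0 : 0 < tau / (2 * K) by rewrite divr_gt0 // mulr_gt0.
set eps := Num.min (mu / 2) (tau / (2 * K)).
have eps0 : 0 < eps by rewrite lt_min tK0 divr_gt0.
have epsm : eps <= mu / 2 by rewrite ge_min lexx.
have epsK : eps <= tau / (2 * K) by rewrite ge_min lexx orbT.
set th := Num.min 1 (tau / (2 * K)).
have th0 : 0 < th by rewrite lt_min tK0 ltr01.
have th1 : th <= 1 by rewrite ge_min lexx.
have thK : th <= tau / (2 * K) by rewrite ge_min lexx orbT.
have m0 : 0 < m%:R :> R by rewrite ltr0n.
set s := Num.min 1 (th * lambda / m%:R).
have s0 : 0 < s by rewrite lt_min ltr01 !divr_gt0 ?mulr_gt0.
have s1 : s <= 1 by rewrite ge_min lexx.
have sth : s <= th * lambda / m%:R by rewrite ge_min lexx orbT.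
have [dl dl0 hd] := diff_eps (hg xstar).1 eps0.
have hlin : forall y, enorm (y - xstar) < dl ->
    enorm (g y - S *m (y - xstar)) <= eps * enorm (y - xstar).
  by move=> y hy; have := hd _ hy; rewrite subrK gxs subr0 (hg xstar).2.
have Le0 : 0 < 2 * (L + eps + 1) by lra.
set d' := Num.min dl (s / (2 * (L + eps + 1))).
have d'0 : 0 < d' by rewrite lt_min dl0 divr_gt0.
have d'dl : d' <= dl by rewrite ge_min lexx.
have d's : 2 * (L + eps + 1) * d' <= s.
  by rewrite mulrC -ler_pdivlMr // ge_min lexx orbT.
have nR : 0 < n%:R :> R by rewrite ltr0n.
have [N _ hN] : \forall k \near \oo, `|xstar - x k| < d' / n%:R.
  by move/cvgrPdist_lt: hx; apply; rewrite divr_gt0.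
have hxN : forall k, (N <= k)%N -> enorm (x k - xstar) < d'.
  move=> k hk; apply: (le_lt_trans (enorm_le_mxnorm _)).
  by rewrite distrC -ltr_pdivlMl // mulrC; exact: hN.
have hgN : forall k, (N <= k)%N -> enorm (g (x k)) <= (L + eps) * enorm (x k - xstar).
  move=> k hk; have hk' := hxN k hk.
  have -> : g (x k) = S *m (x k - xstar) + (g (x k) - S *m (x k - xstar)) by rewrite addrC subrK.
  apply: (le_trans (enormD _ _)); rewrite mulrDl; apply: lerD.
    exact: upper_sym.
  by apply: hlin; apply: lt_le_trans hk' d'dl.
exists (N + m)%N => // k /= hk.
have pm : (mk m k <= m)%N by rewrite /mk geq_minl.
have win : forall j : 'I_(mk m k), (N <= k - mk m k + j)%N.
  move=> j; move: (mk m k) pm j => q hq j.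
  have := leq_addr j (k - q); move: hq hk; clear; lia.
have k1 : (1 <= k)%N by move: m1 hk; clear; lia.
have hkN : (N <= k)%N by move: hk; clear; lia.
set p := mk m k.
set U := Umat g x m k.
set a := alphaAA g x m lambda k.
set G := enorm (g (x k)).
have G0 := Gpos k.
have hcol : forall j, col j U = g (x k) - g (x (k - p + j)%N).
  by move=> j; apply/matrixP => i l; rewrite ord1 !mxE.
have hEk := hxN k hkN.
have hEj : forall j : 'I_p, enorm (x (k - p + j)%N - xstar) < d' by move=> j; apply: hxN.
have ek0 := enorm_ge0 (x k - xstar).
have eps_le : L + eps <= L + eps + 1 by lra.
have hU : forall j, enorm (col j U) <= s.
  move=> j; rewrite hcol; apply: (le_trans (enormB _ _)).
  have h1 := hgN k hkN; have h2 := hgN _ (win j).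
  have ej0 := enorm_ge0 (x (k - p + j)%N - xstar).
  have Le0' : 0 <= L + eps by lra.
  have h3 : (L + eps) * enorm (x k - xstar) <= (L + eps + 1) * d'.
    by apply: ler_pM => //; exact: ltW.
  have h4 : (L + eps) * enorm (x (k - p + j)%N - xstar) <= (L + eps + 1) * d'.
    by apply: ler_pM => //; exact: ltW (hEj j).
  apply: le_trans d's; lra.
have hX : forall j : 'I_p, enorm (x k - x (k - p + j)%N) <= s.
  move=> j; have -> : x k - x (k - p + j)%N = (x k - xstar) - (x (k - p + j)%N - xstar).
    by rewrite opprB addrA subrK.
  apply: (le_trans (enormB _ _)); apply: le_trans d's.
  have hj := hEj j.
  have : 0 <= (L + eps) * d' by rewrite mulr_ge0 // ?ltW //; lra.
  lra.
set A1 := \sum_j `|a j 0|.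
have hA1 : A1 <= p%:R * s * G / lambda := alpha_l1 (g (x k)) lam0 (ltW s0) hU.
have A10 : 0 <= A1 by rewrite /A1 sumr_ge0 // => j _; rewrite normr_ge0.
have sA1 : s * A1 <= th * G.
  have e1 : s * A1 <= s * (p%:R * s * G / lambda) by rewrite ler_wpM2l // ltW.
  apply: (le_trans e1).
  have pm' : p%:R <= m%:R :> R by rewrite ler_nat.
  have e2 : m%:R * s <= th * lambda by rewrite -ler_pdivlMl // mulrC.
  have e3 : s * s <= s by rewrite ger_pMr.
  have s0' := ltW s0.
  have c0 : p%:R * s * s <= m%:R * s * s.
    by apply: ler_wpM2r => //; apply: ler_wpM2r.
  have c1 : m%:R * s * s <= m%:R * s by rewrite -mulrA; apply: ler_wpM2l; [exact: ltW|].
  have c2 : p%:R * s * s / lambda <= th.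
    by rewrite ler_pdivrMr //; apply: le_trans c0 _; apply: le_trans c1 _.
  have -> : s * (p%:R * s * G / lambda) = (p%:R * s * s / lambda) * G by ring.
  by apply: ler_wpM2r => //; exact: ltW.
set w := U *m a.
have hw : enorm w <= th * G.
  by rewrite /w mul_col; apply: le_trans (comb_bound a hU) sA1.
set dd := \sum_j a j 0 *: (x k - x (k - p + j)%N).
have hdd : enorm dd <= th * G := le_trans (comb_bound a hX) sA1.
have hw_sum : w = \sum_j a j 0 *: (g (x k) - g (x (k - p + j)%N)).
  by rewrite /w mul_col; apply: eq_bigr => j _; rewrite hcol.
have hxk1 : x k.+1 = x k - eta *: (g (x k) - w) - dd.
  move: (hAA k k1) => /= ->; rewrite /Gmap.
  rewrite (aa_identity a (x k) (g (x k)) (fun j => x (k - p + j)%N)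
             (fun j => g (x (k - p + j)%N)) eta) -hw_sum.
  by [].
have eek1 : x k.+1 - xstar = (x k - xstar) - eta *: (g (x k) - w) - dd.
  by rewrite hxk1; apply/matrixP => i j; rewrite !mxE; ring.
have egk : g (x k) = S *m (x k - xstar) + (g (x k) - S *m (x k - xstar)).
  by rewrite addrC subrK.
have hrk := hlin _ (lt_le_trans hEk d'dl).
have egk1 : g (x k.+1) = S *m (x k.+1 - xstar) + (g (x k.+1) - S *m (x k.+1 - xstar)).
  by rewrite addrC subrK.
have hk1N : (N <= k.+1)%N by apply: leq_trans hkN _.
have hrk1 := hlin _ (lt_le_trans (hxN _ hk1N) d'dl).
have hst := step hS hR mu0 muL eta0 etaLm (ltW eps0) epsm (ltW th0) th1 egk hrk egk1 hrk1 eek1 hw hdd.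
have htK : (th + eps) * K <= tau.
  have e1 : (th + eps) * K <= (tau / (2 * K) + tau / (2 * K)) * K.
    by apply: ler_wpM2r; [exact: ltW | exact: lerD].
  apply: (le_trans e1); rewrite le_eqVlt; apply/orP; left; apply/eqP.
  by field; rewrite gt_eqF.
rewrite /o ger0_norm ?le_max ?lexx // ge_max (ltW tau0) /=.
rewrite /ratio /delta hPi -/U -/a -/w -/G.
rewrite mulrAC -mulrBl ler_pdivrMr //.
have : (th + eps) * K * G <= tau * G by apply: ler_wpM2r => //; exact: ltW.
rewrite -/K -/G in hst.
lra.
Qed.
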